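(* Let $(P,\preceq)$ be a locally finite meet semilattice, $S=\{x_1,\dots,x_n\}\subseteq P$ a finite meet closed set, and suppose $x_i\in S$ generates a double-chain set in $S$, with $\mathrm{meetcl}(C_S(x_i))\setminus C_S(x_i)=A_i\cup B_i$, $A_i\cap B_i=\emptyset$, $A_i,B_i$ chains. Let $x_a$ and $x_b$ be the top elements of $A_i$ and $B_i$ (if one chain is empty, $x_a=x_b$ is the top of the other). For $x_k\in A_i\cup B_i$ let $\eta(x_k)$ be the number of elements $z\in C_S(x_i)$ attached to $x_k$ (i.e. covering $x_k$ in $\mathrm{meetcl}(C_S(x_i))$). (I) If no element of $C_S(x_i)$ is attached to both chains, then $\mu_S(x_j,x_i)=1$ if $x_j=x_i$; $=-1$ if $x_j\in C_S(x_i)$; $=\eta(x_j)-1$ if $x_j\in\{x_a,x_b\}$ is maximal in $A_i\cup B_i$; $=\eta(x_j)$ if $x_j\in\{x_a,x_b\}$ is not maximal in $A_i\cup B_i$; $=\eta(x_j)$ if $x_j\in A_i\cup B_i$ is not maximal in $A_i\cup B_i$ and $x_j\ne x_a\wedge x_b$; $=\eta(x_j)+1$ if $x_a,x_b$ are incomparable and $x_j=x_a\wedge x_b\in A_i\cup B_i$; and $=0$ otherwise. (II) If exactly one element $x_p\in C_S(x_i)$ is attached to some $x_q\in A_i$ and to some $x_r\in B_i$, then $\mu_S(x_j,x_i)=1$ if $x_j=x_i$; $=-1$ if $x_j\in C_S(x_i)$; $=\eta(x_j)-1$ if $x_j=x_a$ or $x_j=x_b$; $=\eta(x_j)$ if $x_j\in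 A_i\cup B_i$ with $x_j\neq x_a$, $x_j\ne x_b$; and $=0$ otherwise.
   Context: $\mu_S$ is the Möbius function of the finite poset $(S,\preceq)$: $\mu_S(x,x)=1$ and $\mu_S(y,x)=-\sum_{y\prec w\preceq x,\ w\in S}\mu_S(w,x)$ for $y\prec x$, and $\mu_S(y,x)=0$ if $y\not\preceq x$. $C_S(x)$ is the set of elements of $S$ covered by $x$ in $S$; $\mathrm{meetcl}(C)$ is the set of all finite meets of elements of $C$. An element $x\in S$ generates a double-chain set in $S$ if $\mathrm{meetcl}(C_S(x))\setminus C_S(x)$ is a union of two disjoint (possibly empty) chains. An element $z\in C_S(x_i)$ is attached to $x_k\in A_i\cup B_i$ if $z$ covers $x_k$ in the poset $\mathrm{meetcl}(C_S(x_i))$; $z$ is attached to a chain if it is attached to some element of it. *)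

(* Defs.v *)
From HB Require Import structures.
From mathcomp Require Import all_boot all_order all_algebra.
Set Implicit Arguments. Unset Strict Implicit. Unset Printing Implicit Defensive.
Import Order.TTheory GRing.Theory Num.Theory.

Section Defs.
Context {d : Order.disp_t} {P : meetSemilatticeType d}.
Local Open Scope order_scope.

Definition locally_finite : Prop :=
  forall x y : P, exists s : seq P, forall z, x <= z -> z <= y -> z \in s.

Definition meet_closed_seq (S : seq P) : Prop :=
  {in S &, forall x y, x `&` y \in S}.

(* Möbius function mu_S of the finite poset (S, <=), by the recursion
   mu(x,x) = 1, mu(y,x) = - sum_{y < w <= x, w in S} mu(w,x) for y < x,
   mu(y,x) = 0 otherwise.  [n] is a fuel parameter; fuel [size S] is enough
   (any strict chain in S has fewer than [size S] steps). *)
Fixpoint mu_rec (S : seq P) (n : nat) (y x : P) : int :=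
  if y == x then 1%R
  else if y < x then
    (if n is n'.+1 then
       (- \sum_(w <- S | (y < w)%O && (w <= x)%O) mu_rec S n' w x)%R
     else 0%R)
  else 0%R.

Definition moebius (S : seq P) (y x : P) : int := mu_rec S (size S) y x.

Definition covby (T : seq P) (y z : P) : bool :=
  [&& y \in T, z \in T, y < z & ~~ has (fun w => (y < w) && (w < z)) T].

Definition cov_set (S : seq P) (x : P) : seq P :=
  [seq z <- S | covby S z x].

(* meetcl(C): the meets of all nonempty subfamilies of C *)
Definition meetcl (C : seq P) : seq P :=
  pmap (fun t : (size C).-tuple bool =>
          if mask t C is x :: s then Some (foldr Order.meet x s) else None)
       (enum {: (size C).-tuple bool}).

Definition attached (C : seq P) (z xk : P) : bool := covby (meetcl C) xk z.

Definition eta_att (C : seq P) (xk : P) : nat := count (fun z => attached C z xk) C.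

Definition is_chain (A : seq P) : Prop := {in A &, forall y z, y >=< z}.

Definition is_top (A : seq P) (y : P) : bool := (y \in A) && all (fun w => w <= y) A.

Definition maximal_in (T : seq P) (y : P) : bool :=
  (y \in T) && ~~ has (fun w => y < w) T.

Definition double_chain (S : seq P) (x : P) (A B : seq P) : Prop :=
  let C := cov_set S x in
  [/\ forall y, ((y \in meetcl C) && (y \notin C)) = ((y \in A) || (y \in B)),
      forall y, y \in A -> y \notin B,
      is_chain A & is_chain B].

End Defs.

(* Main.v *)
Require Import Defs.
From HB Require Import structures.
From mathcomp Require Import all_boot all_order all_algebra.
From mathcomp Require Import zify.
From Stdlib Require Import Lia.
Import Order.TTheory GRing.Theory Num.Theory.
Set Implicit Arguments. Unset Strict Implicit. Unset Printing Implicit Defensive.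

Section Gen.
Local Open Scope order_scope.
Context {d : Order.disp_t} {P : meetSemilatticeType d}.

Lemma count_lt_strict (s : seq P) (a1 a2 : pred P) z :
  (forall v, a1 v -> a2 v) -> a2 z -> ~~ a1 z -> z \in s ->
  (count a1 s < count a2 s)%N.
Proof.
move=> sub a2z a1z; elim: s => // h t IH; rewrite in_cons /= => /orP[/eqP<-|zt].
  rewrite (negbTE a1z) a2z /= add0n add1n ltnS; exact: sub_count.
have := IH zt; case: (boolP (a1 h)) => [a1h|_] /=.
  by rewrite (sub _ a1h) /= !add1n ltnS.
rewrite add0n => H; apply: (leq_trans H); exact: leq_addl.
Qed.

Lemma exists_max (s : seq P) (p : pred P) z : z \in s -> p z ->
  exists2 m, (m \in s) && p m & ~~ has (fun v => p v && (m < v)) s.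
Proof.
move=> zs pz.
move: {2}(count (fun v => p v && (z < v)) s) (leqnn (count (fun v => p v && (z < v)) s)) => n.
elim: n z zs pz => [|n IH] z zs pz Hc;
  (case: (boolP (has (fun v => p v && (z < v)) s)) => [hh|hn];
   last by exists z; rewrite ?zs ?pz).
  by move: hh; rewrite has_count; move: Hc; rewrite leqn0 => /eqP ->.
case/hasP: hh => v vs /andP[pv zv].
apply: (IH v vs pv); rewrite -ltnS; apply: leq_trans Hc.
apply: (count_lt_strict (z := v)) => //; last by rewrite ltxx andbF.
  by move=> u /andP[-> vu]; rewrite (lt_trans zv vu).
by rewrite pv zv.
Qed.

Lemma count_le1 (s : seq P) (p : pred P) : uniq s ->
  {in s &, forall a b, p a -> p b -> a = b} -> (count p s <= 1)%N.
Proof.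
elim: s => //= h t IH /andP[ht ut] H.
case: (boolP (p h)) => ph /=.
  rewrite add1n ltnS leqNgt -has_count; apply/hasP => -[v vt pv].
  have hv : h = v by apply: H; rewrite ?in_cons ?eqxx ?vt ?orbT.
  by move: ht; rewrite hv vt.
rewrite add0n; apply: IH => // a b at_ bt; apply: H; by rewrite in_cons ?at_ ?bt orbT.
Qed.

Lemma count_ge1 (s : seq P) (p : pred P) a : a \in s -> p a -> (0 < count p s)%N.
Proof. by move=> as_ pa; rewrite -has_count; apply/hasP; exists a. Qed.

Lemma count_single (s : seq P) (Q : pred P) a : uniq s -> a \in s ->
  count (fun w => Q w && (w == a)) s = Q a.
Proof.
move=> us as_; rewrite (eq_count (a2 := fun w => Q a && (w == a))); last first.
  by move=> w /=; case: eqP => [->|]; rewrite ?andbF ?andbT.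
case: (Q a) => /=; last by rewrite count_pred0.
by rewrite count_uniq_mem ?as_.
Qed.

Lemma count_one_eq (s : seq P) (p : pred P) a b : uniq s -> count p s = 1%N ->
  a \in s -> b \in s -> p a -> p b -> a = b.
Proof.
move=> us c1 as_ bs pa pb; apply/eqP; apply/negPn/negP => nab.
have: (size [:: a; b] <= size (filter p s))%N.
  apply: uniq_leq_size; first by rewrite /= in_cons in_nil orbF nab.
  by move=> v; rewrite !in_cons in_nil orbF mem_filter => /orP[]/eqP->; rewrite ?pa ?pb.
by rewrite size_filter c1.
Qed.

Lemma sum_bool (s : seq P) (Pr Q : pred P) :
  (\sum_(i <- s | Pr i) (Q i : nat))%N = count (fun i => Pr i && Q i) s.
Proof.
elim: s => [|h t IH]; first by rewrite big_nil.
by rewrite big_cons /= -IH; case: (Pr h); case: (Q h).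
Qed.

Lemma sum_boolT (s : seq P) (Q : pred P) :
  (\sum_(i <- s) (Q i : nat))%N = count Q s.
Proof. by rewrite (sum_bool s xpredT). Qed.

Lemma count_two (s : seq P) (Q : pred P) a b : uniq s -> a != b -> a \in s -> b \in s ->
  count (fun w => Q w && ((w == a) || (w == b))) s = (Q a + Q b)%N.
Proof.
move=> us nab as_ bs.
rewrite -(count_single Q us as_) -(count_single Q us bs) -count_predUI.
have -> : count (predI (fun w => Q w && (w == a)) (fun w => Q w && (w == b))) s = 0%N.
  apply/eqP; rewrite -leqn0 leqNgt -has_count; apply/hasPn => w _ /=.
  by apply/negP => /andP[/andP[_ /eqP ->] /andP[_]]; rewrite (negbTE nab).
by rewrite addn0; apply: eq_count => w /=; rewrite andb_orr.
Qed.

Lemma sumZ (s : seq P) (Pr : pred P) (F : P -> nat) :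
  (\sum_(i <- s | Pr i) Posz (F i))%R = Posz (\sum_(i <- s | Pr i) F i)%N.
Proof.
elim: s => [|h t IH]; first by rewrite !big_nil.
by rewrite !big_cons IH; case: (Pr h) => //; rewrite PoszD.
Qed.

Definition isglb (T : seq P) (y : P) := forall z, (z <= y) = all (fun v => z <= v) T.

Lemma glb_foldr h s : isglb (h :: s) (foldr Order.meet h s).
Proof.
move=> z; elim: s => [|a s IH] /=; first by rewrite andbT.
by rewrite lexI IH /=; case: (z <= h); case: (z <= a).
Qed.

Lemma glb_unique T y y' : isglb T y -> isglb T y' -> y = y'.
Proof.
move=> H1 H2; apply/le_anti; rewrite H2 -H1 lexx /=.
by rewrite H1 -H2 lexx.
Qed.

Lemma meetcl_glb (C : seq P) y : y \in meetcl C ->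
  exists h, exists2 s, all (mem C) (h :: s) & isglb (h :: s) y.
Proof.
rewrite mem_pmap => /mapP [t _].
case E: (mask t C) => [|h s] // [->]; exists h, s; last exact: glb_foldr.
by apply/allP => v; rewrite -E => /mem_mask.
Qed.

Lemma glb_meetcl (C : seq P) (T : seq P) y : T != [::] -> all (mem C) T ->
  isglb T y -> y \in meetcl C.
Proof.
move=> nT aT gy; rewrite mem_pmap; apply/mapP.
exists (map_tuple (mem T) (in_tuple C)); first by rewrite mem_enum.
rewrite /= -filter_mask.
case E: (filter (mem T) C) => [|h s].
  case: T nT aT {gy} E => // a T' _ /= /andP[aC _] /eqP; rewrite -size_eq0 size_filter.
  move=> H; have := count_ge1 (p := mem (a :: T')) aC.
  by rewrite (eqP H) ltnn => /(_ (mem_head _ _)).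

rewrite /=; congr Some; apply: glb_unique _ (glb_foldr h s) => z; rewrite -E gy.
apply: eq_all_r => v; rewrite mem_filter /=.
by case: (boolP (v \in T)) => // vT; have := allP aT v vT; rewrite /= => ->.
Qed.

Lemma mu_rec_unique (S : seq P) x (f : P -> int) :
  f x = 1%R ->
  (forall y, y \in S -> y != x -> ~~ (y < x) -> f y = 0%R) ->
  (forall y, y \in S -> y < x -> f y = (- \sum_(w <- S | (y < w)%O && (w <= x)%O) f w)%R) ->
  forall n y, y \in S -> (count (fun w => (y < w)%O && (w <= x)%O) S < n)%N -> mu_rec S n y x = f y.
Proof.
move=> fx f0 frec; elim=> [|n IH] y yS //= Hc.
case: eqP => [->|/eqP nyx]; first by rewrite fx.
case: ifP => yx; last by rewrite f0 // yx.
rewrite frec //; congr (- _)%R.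
rewrite big_seq_cond [in RHS]big_seq_cond; apply: eq_bigr => w /andP[wS /andP[yw wx]].
apply: IH => //; rewrite -ltnS; apply: leq_trans Hc.
apply: (count_lt_strict (z := w)) => //; last by rewrite ltxx.
  by move=> u /andP[wu ->]; rewrite (lt_trans yw wu).
by rewrite yw wx.
Qed.

Lemma moebius_unique (S : seq P) x (f : P -> int) :
  f x = 1%R ->
  (forall y, y \in S -> y != x -> ~~ (y < x) -> f y = 0%R) ->
  (forall y, y \in S -> y < x -> f y = (- \sum_(w <- S | (y < w)%O && (w <= x)%O) f w)%R) ->
  forall y, y \in S -> moebius S y x = f y.
Proof.
move=> fx f0 frec y yS; apply: mu_rec_unique => //.
rewrite -(count_predT S); apply: (count_lt_strict (z := y)) => //.
by rewrite ltxx.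
Qed.
End Gen.

Section Main.
Local Open Scope order_scope.
Context {d : Order.disp_t} {P : meetSemilatticeType d}.
Variables (S : seq P) (x : P) (A B : seq P) (xa xb : P).
Hypotheses (uS : uniq S) (mcS : meet_closed_seq S) (xS : x \in S)
  (dc : double_chain S x A B)
  (tA : A != [::] -> is_top A xa) (tA' : A == [::] -> B != [::] -> is_top B xa)
  (tB : B != [::] -> is_top B xb) (tB' : B == [::] -> A != [::] -> is_top A xb).

Local Notation C := (cov_set S x).
Local Notation M := (meetcl C).
Definition Dm w := (w \in M) && (w \notin C).

Lemma memC c : (c \in C) = (c \in S) && covby S c x.
Proof. by rewrite mem_filter andbC. Qed.

Lemma C_lt c : c \in C -> c < x.
Proof. by rewrite memC => /andP[_ /and4P[]]. Qed.

Lemma C_anti c1 c2 : c1 \in C -> c2 \in C -> c1 <= c2 -> c1 = c2.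
Proof.
move=> c1C c2C; rewrite le_eqVlt => /orP[/eqP//|lt12].
move: c1C; rewrite memC => /andP[_ /and4P[_ _ _ /hasPn /(_ c2)]].
have c2S : c2 \in S by move: c2C; rewrite memC => /andP[].
by move/(_ c2S); rewrite lt12 (C_lt c2C).
Qed.

Lemma C_S c : c \in C -> c \in S.
Proof. by rewrite memC => /andP[]. Qed.

Lemma C_M c : c \in C -> c \in M.
Proof.
move=> cC; apply: (glb_meetcl (T := [:: c])) => //=; first by rewrite cC.
by move=> z /=; rewrite andbT.
Qed.

Lemma M_le w : w \in M -> exists2 c, c \in C & w <= c.
Proof.
case/meetcl_glb => h [s /andP[hC _] g]; exists h => //.
by have := g w; rewrite lexx /= => /esym/andP[].
Qed.

Lemma M_meet w v : w \in M -> v \in M -> w `&` v \in M.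
Proof.
case/meetcl_glb => h1 [s1 a1 g1]; case/meetcl_glb => h2 [s2 a2 g2].
apply: (glb_meetcl (T := (h1 :: s1) ++ (h2 :: s2))) => //; first by rewrite all_cat a1 a2.
by move=> z; rewrite lexI g1 g2 all_cat.
Qed.

Lemma fold_S h s : all (mem S) (h :: s) -> foldr Order.meet h s \in S.
Proof.
elim: s => [|a s IH] /=; first by rewrite andbT.
move=> /and3P[hS aS sS]; apply: mcS => //; apply: IH; by rewrite /= hS.
Qed.

Lemma M_S w : w \in M -> w \in S.
Proof.
case/meetcl_glb => h [s a g]; rewrite (glb_unique g (glb_foldr h s)); apply: fold_S.
by apply/allP => v /(allP a) /C_S.
Qed.

Lemma M_lt w : w \in M -> w < x.
Proof. by case/M_le => c /C_lt cx wc; apply: le_lt_trans wc cx. Qed.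

Lemma D_lt w : Dm w -> exists2 c, c \in C & w < c.
Proof.
case/andP => /M_le [c cC wc] wC; exists c => //; rewrite lt_neqAle wc andbT.
by apply: contraNneq wC => ->.
Qed.

Lemma Dm_le v w : Dm v -> w \in M -> w <= v -> Dm w.
Proof.
move=> /D_lt [c cC vc] wM wv; rewrite /Dm wM /=; apply/negP => wC.
have := C_anti wC cC (ltW (le_lt_trans wv vc)) => ew.
by move: (le_lt_trans wv vc); rewrite ew ltxx.
Qed.

Lemma DAB w : Dm w = (w \in A) || (w \in B).
Proof. by case: dc => H _ _ _; rewrite -H. Qed.

Lemma A_top w : w \in A -> w <= xa.
Proof.
move=> wA; have /tA /andP[_ /allP H] : A != [::] by case: (A) wA.
exact: H.
Qed.

Lemma B_top w : w \in B -> w <= xb.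
Proof.
move=> wB; have /tB /andP[_ /allP H] : B != [::] by case: (B) wB.
exact: H.
Qed.

Lemma xa_D w : Dm w -> Dm xa.
Proof.
rewrite !DAB; case: (boolP (A == [::])) => [/eqP A0|/tA /andP[-> _]//].
rewrite A0 /= => wB; have nB : B != [::] by case: (B) wB.
by case/andP: (tA' (introT eqP A0) nB).
Qed.

Lemma xb_D w : Dm w -> Dm xb.
Proof.
rewrite !DAB; case: (boolP (B == [::])) => [/eqP B0|/tB /andP[-> _]//]; last by rewrite orbT.
rewrite B0 orbF => wA; have nA : A != [::] by case: (A) wA.
by case/andP: (tB' (introT eqP B0) nA) => ->.
Qed.

Lemma att_lt c w : attached C c w -> [&& w \in M, c \in M & w < c].
Proof. by case/and4P => -> -> ->. Qed.

Lemma att_eq c w1 w2 : attached C c w1 -> attached C c w2 -> w1 <= w2 -> w1 = w2.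
Proof.
move=> /and4P[_ _ _ /hasPn H] /and4P[w2M _ w2c _]; rewrite le_eqVlt => /orP[/eqP //|lt12].
by have := H _ w2M; rewrite lt12 w2c.
Qed.

Lemma att_cmp c w1 w2 : attached C c w1 -> attached C c w2 -> w1 >=< w2 -> w1 = w2.
Proof.
move=> a1 a2 /orP[le|le]; first exact: att_eq a1 a2 le.
by apply/esym; apply: att_eq a2 a1 le.
Qed.

Lemma exist_att c y w0 : c \in C -> y <= c -> Dm w0 -> y <= w0 ->
  exists2 w, (w \in S) && Dm w & (y <= w) && attached C c w.
Proof.
move=> cC yc Dw0 yw0.
have w0M : w0 \in M by case/andP: Dw0.
have cM := C_M cC.
set v := c `&` w0.
have vM : v \in M by apply: M_meet.
have vc : v < c.
  rewrite lt_neqAle leIl andbT; apply/negP => /eqP ev.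
  have cw0 : c <= w0 by rewrite -ev leIr.
  case: (D_lt Dw0) => c' c'C w0c'.
  have := C_anti cC c'C (ltW (le_lt_trans cw0 w0c')) => ecc.
  by move: (le_lt_trans cw0 w0c'); rewrite ecc ltxx.
have [m /andP[mM /andP[vm mc]] nh] := exists_max (p := fun u => (v <= u) && (u < c)) vM
  (introT andP (conj (lexx v) vc)).
have Dmm : Dm m.
  rewrite /Dm mM /=; apply/negP => mC.
  by have := C_anti mC cC (ltW mc) => em; move: mc; rewrite em ltxx.
exists m; first by rewrite (M_S mM) Dmm.
rewrite (le_trans (y := v)) //=; last by rewrite lexI yc yw0.
rewrite /attached /covby mM cM mc /=; apply/hasPn => u uM; apply/negP => /andP[mu uc].
by move/hasPn: nh => /(_ u uM); rewrite uc (le_trans vm (ltW mu)) mu.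
Qed.

Lemma exist_cov y : y \in S -> y < x -> exists2 c, c \in C & y <= c.
Proof.
move=> yS yx.
have [m /andP[mS /andP[ym mx]] nh] := exists_max (p := fun u => (y <= u) && (u < x)) yS
  (introT andP (conj (lexx y) yx)).
exists m => //; rewrite memC mS /covby mS xS mx /=; apply/hasPn => u u0.
apply/negP => /andP[mu ux].
by move/hasPn: nh => /(_ u u0); rewrite ux (le_trans ym (ltW mu)) mu.
Qed.

Definition Fd (dl : P -> int) w : int :=
  (Posz (w == x) - Posz (w \in C) + (if Dm w then Posz (eta_att C w) + dl w else 0))%R.

Lemma uniqC : uniq C.
Proof. exact: filter_uniq. Qed.

Lemma main_sum dl :
  (forall y, y \in S -> y < x -> (exists2 w0, (w0 \in S) && Dm w0 & y <= w0) ->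
    (\sum_(w <- S | (y <= w)%O && Dm w) (Posz (eta_att C w) + dl w))%R =
      (Posz (\sum_(c <- C) ((y <= c)%O : nat))%N - 1)%R) ->
  forall y, y \in S -> y < x -> (\sum_(w <- S | (y <= w)%O && (w <= x)%O) Fd dl w)%R = 0%R.
Proof.
move=> Hd y yS yx.
rewrite /Fd !big_split /= sumrN !sumZ !sum_bool.
rewrite count_single // lexx (ltW yx) /=.
have -> : count (fun i => ((y <= i) && (i <= x)) && (i \in C)) S =
          (\sum_(c <- C) ((y <= c)%O : nat))%N.
  rewrite sum_boolT /cov_set count_filter; apply: eq_in_count => w wS /=.
  rewrite memC wS /=; case: (boolP (covby S w x)) => cw; rewrite ?andbF ?andbT //.
  by case/and4P: cw => _ _ /ltW ->; rewrite andbT.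
have -> : (\sum_(i <- S | (y <= i)%O && (i <= x)%O) (if Dm i then Posz (eta_att C i) + dl i else 0))%R
   = (\sum_(w <- S | (y <= w)%O && Dm w) (Posz (eta_att C w) + dl w))%R.
  rewrite big_mkcond [RHS]big_mkcond /=; apply: eq_bigr => w _.
  case: (boolP (Dm w)) => Dw; rewrite ?andbF ?andbT; last by case: ifP.
  move: (Dw); rewrite /Dm => /andP[/M_lt /ltW -> _]; by rewrite andbT.
case: (boolP (has (fun w0 => Dm w0 && (y <= w0)) S)) => [/hasP ex|nex].
  rewrite Hd //; first by lia.
  by case: ex => w0 w0S /andP[Dw0 yw0]; exists w0; rewrite ?w0S.
have -> : (\sum_(w <- S | (y <= w)%O && Dm w) (Posz (eta_att C w) + dl w))%R = 0%R.
  rewrite big_seq_cond big1 // => w /andP[wS /andP[yw Dw]].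
  by move/hasPn: nex => /(_ w wS); rewrite Dw yw.
have -> : (\sum_(c <- C) ((y <= c)%O : nat))%N = 1%N.
  rewrite sum_boolT; apply/anti_leq/andP; split.
    apply: count_le1; first exact: uniqC.
    move=> c1 c2 c1C c2C yc1 yc2.
    case: (boolP (c1 `&` c2 \in C)) => hC.
      have e1 := C_anti hC c1C (leIl _ _); have e2 := C_anti hC c2C (leIr _ _).
      by rewrite -e1 e2.
    have D12 : Dm (c1 `&` c2) by rewrite /Dm hC andbT M_meet ?C_M.
    move/hasPn: nex => /(_ _ (M_S (M_meet (C_M c1C) (C_M c2C)))).
    by rewrite D12 lexI yc1 yc2.
  by case: (exist_cov yS yx) => c cC yc; apply: (count_ge1 cC).
by rewrite addr0 subrr.
Qed.

Lemma final_formula dl (f : P -> int) :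
  (forall w, w \in S -> f w = Fd dl w) ->
  (forall y, y \in S -> y < x -> (exists2 w0, (w0 \in S) && Dm w0 & y <= w0) ->
    (\sum_(w <- S | (y <= w)%O && Dm w) (Posz (eta_att C w) + dl w))%R =
      (Posz (\sum_(c <- C) ((y <= c)%O : nat))%N - 1)%R) ->
  forall y, y \in S -> moebius S y x = f y.
Proof.
move=> fF Hd; apply: moebius_unique.
- rewrite fF // /Fd eqxx.
  have -> : (x \in C) = false by apply/negP => /C_lt; rewrite ltxx.
  have -> : Dm x = false by apply/negP => /andP[/M_lt]; rewrite ltxx.
  by [].
- move=> y yS nyx nlt; rewrite fF // /Fd (negbTE nyx).
  have -> : (y \in C) = false by apply/negP => /C_lt; rewrite (negbTE nlt).
  have -> : Dm y = false by apply/negP => /andP[/M_lt]; rewrite (negbTE nlt).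
  by [].
- move=> y yS yx; rewrite fF //; have := main_sum Hd yS yx.
  rewrite big_mkcond (bigD1_seq y) //= lexx (ltW yx) /= -big_mkcondr.
  move=> /eqP; rewrite addr_eq0 => /eqP ->.
  congr (- _)%R; rewrite big_seq_cond [RHS]big_seq_cond.
  apply: eq_big => w; last by case/andP => wS _; rewrite fF.
  by rewrite (lt_neqAle y) (eq_sym y); case: (w \in S); case: (w != y); case: (y <= w)%O.
Qed.

Lemma eta_exchange y :
  (\sum_(w <- S | (y <= w)%O && Dm w) eta_att C w)%N =
  (\sum_(c <- C) count (fun w => ((y <= w)%O && Dm w) && attached C c w) S)%N.
Proof.
rewrite /eta_att (eq_bigr (fun w => \sum_(c <- C) (attached C c w : nat))%N); last first.
  by move=> w _; rewrite sum_boolT.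
rewrite exchange_big /=; apply: eq_bigr => c _; exact: sum_bool.
Qed.

Definition uniq_att c := forall w1 w2, Dm w1 -> Dm w2 ->
  attached C c w1 -> attached C c w2 -> w1 = w2.

Lemma k_val y w0 c : c \in C -> uniq_att c -> w0 \in S -> Dm w0 -> y <= w0 ->
  count (fun w => ((y <= w)%O && Dm w) && attached C c w) S = (y <= c)%O.
Proof.
move=> cC ua w0S Dw0 yw0; case: (boolP (y <= c)) => yc /=.
  apply/anti_leq/andP; split.
    apply: count_le1 => // w1 w2 _ _ /andP[/andP[_ D1] a1] /andP[/andP[_ D2] a2].
    exact: ua a1 a2.
  have [w /andP[wS Dw] /andP[yw aw]] := exist_att cC yc Dw0 yw0.
  by apply: (count_ge1 wS); rewrite yw Dw aw.
apply/eqP; rewrite -leqn0 leqNgt -has_count; apply/hasPn => w _.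
apply/negP => /andP[/andP[yw _] /att_lt /and3P[_ _ wc]].
by move: yc; rewrite (le_trans yw (ltW wc)).
Qed.

Lemma uniq_att_nb c : c \in C ->
  ~~ (has (fun q => attached C c q) A && has (fun r => attached C c r) B) -> uniq_att c.
Proof.
case: dc => _ disj chA chB cC nab w1 w2; rewrite !DAB => D1 D2 a1 a2.
case/orP: D1 => w1A; case/orP: D2 => w2A.
- exact: att_cmp a1 a2 (chA _ _ w1A w2A).
- by case/negP: nab; apply/andP; split; apply/hasP; [exists w1|exists w2].
- by case/negP: nab; apply/andP; split; apply/hasP; [exists w2|exists w1].
- exact: att_cmp a1 a2 (chB _ _ w1A w2A).
Qed.

Lemma top_of_D w : Dm w -> (w <= xa) || (w <= xb).
Proof. by rewrite DAB => /orP[/A_top ->|/B_top ->]; rewrite ?orbT. Qed.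

Definition dlI w : int :=
  (- Posz (maximal_in (A ++ B) w) + Posz (~~ (xa >=< xb)%O && (w == xa `&` xb)))%R.

Lemma maxAB w : maximal_in (A ++ B) w -> (w == xa) || (w == xb).
Proof.
case/andP => wAB /hasPn nh; move: (wAB); rewrite mem_cat => /orP[wA|wB].
  have xaA : xa \in A by have /tA /andP[] : A != [::] by case: (A) wA.
  move: (A_top wA); rewrite le_eqVlt => /orP[-> //|lt].
  by have := nh xa; rewrite mem_cat xaA lt => /(_ isT).
have xbB : xb \in B by have /tB /andP[] : B != [::] by case: (B) wB.
move: (B_top wB); rewrite le_eqVlt => /orP[->|lt]; first by rewrite orbT.
by have := nh xb; rewrite mem_cat xbB orbT lt => /(_ isT).
Qed.

Lemma incomp_ne w0 : Dm w0 -> ~~ (xa >=< xb)%O -> (xa \in A) && (xb \in B).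
Proof.
move=> Dw0 nc.
case: (boolP (A == [::])) => [/eqP A0|nA]; case: (boolP (B == [::])) => [/eqP B0|nB].
- by move: Dw0; rewrite DAB A0 B0.
- have /andP[xaB _] := tA' (introT eqP A0) nB; have /andP[_ /allP H] := tB nB.
  by case/negP: nc; rewrite /Order.comparable (H _ xaB).
- have /andP[xbA _] := tB' (introT eqP B0) nA; have /andP[_ /allP H] := tA nA.
  by case/negP: nc; rewrite /Order.comparable (H _ xbA) orbT.
- by case/andP: (tA nA) => ->; case/andP: (tB nB) => ->.
Qed.

Lemma sum_dlI y w0 : w0 \in S -> Dm w0 -> y <= w0 ->
  (\sum_(w <- S | (y <= w)%O && Dm w) dlI w)%R = (-1)%R.
Proof.
move=> w0S Dw0 yw0.
have Dxa := xa_D Dw0; have Dxb := xb_D Dw0.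
have xaM : xa \in M by case/andP: Dxa.
have xbM : xb \in M by case/andP: Dxb.
have Dm' : Dm (xa `&` xb) by apply: Dm_le Dxa (M_meet xaM xbM) (leIl _ _).
have yab : (y <= xa) || (y <= xb).
  by case/orP: (top_of_D Dw0) => h; rewrite (le_trans yw0 h) ?orbT.
have xaAB : xa \in A ++ B by rewrite mem_cat -DAB.
have xbAB : xb \in A ++ B by rewrite mem_cat -DAB.
rewrite /dlI big_split sumrN /= !sumZ !sum_bool.
case: (boolP (xa >=< xb)%O) => cmp /=.
  set t := if (xa <= xb)%O then xb else xa.
  have xat : xa <= t by rewrite /t; case: ifP => // _; rewrite lexx.
  have xbt : xb <= t.
    rewrite /t; case: ifP => [_|h]; first by rewrite lexx.
    by move: cmp; rewrite /Order.comparable h.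
  have Dt : Dm t by rewrite /t; case: ifP.
  rewrite (eq_count (a1 := fun i => ((y <= i)%O && Dm i) && (~~ true && (i == xa `&` xb))) (a2 := pred0)); last by move=> w /=; rewrite andbF.
  rewrite count_pred0 addr0.
  rewrite (@eq_in_count _ _ (fun w => ((y <= w)%O && Dm w) && (w == t))); last first.
    move=> w wS /=; congr andb; apply/idP/idP => [mw|/eqP ->].
      case/orP: (maxAB mw) => /eqP ew; rewrite /t; case: ifP => h.
      - rewrite ew; move: h; rewrite le_eqVlt => /orP[//|lt]; exfalso.
        by case/andP: mw => _ /hasPn /(_ xb xbAB); rewrite ew lt.
      - by rewrite ew.
      - by rewrite ew.
      - rewrite ew; move: cmp; rewrite /Order.comparable h /= le_eqVlt => /orP[//|lt]; exfalso.
        by case/andP: mw => _ /hasPn /(_ xa xaAB); rewrite ew lt.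
    rewrite /maximal_in mem_cat -DAB Dt /=; apply/hasPn => v; rewrite mem_cat => vAB.
    apply/negP => tv; case/orP: vAB => [/A_top vxa|/B_top vxb].
      by move: (lt_le_trans tv (le_trans vxa xat)); rewrite ltxx.
    by move: (lt_le_trans tv (le_trans vxb xbt)); rewrite ltxx.
  rewrite count_single // ?Dt ?andbT; last by rewrite /t; case: ifP; rewrite M_S //.
  by case/orP: yab => h; rewrite (le_trans h) //.
have /andP[xaA xbB] := incomp_ne Dw0 cmp.
have nab : xa != xb by apply: contraNneq cmp => ->; rewrite /Order.comparable lexx.
rewrite (@eq_in_count _ _ (fun w => ((y <= w)%O && Dm w) && ((w == xa) || (w == xb)))); last first.
  move=> w wS /=; congr andb; apply/idP/idP => [/maxAB //|/orP[]/eqP ->].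
    rewrite /maximal_in xaAB /=; apply/hasPn => v; rewrite mem_cat => /orP[/A_top vxa|/B_top vxb].
      by apply/negP => lt; move: (lt_le_trans lt vxa); rewrite ltxx.
    by apply/negP => lt; case/negP: cmp; rewrite /Order.comparable (ltW (lt_le_trans lt vxb)).
  rewrite /maximal_in xbAB /=; apply/hasPn => v; rewrite mem_cat => /orP[/A_top vxa|/B_top vxb].
    by apply/negP => lt; case/negP: cmp; rewrite /Order.comparable (ltW (lt_le_trans lt vxa)) orbT.
  by apply/negP => lt; move: (lt_le_trans lt vxb); rewrite ltxx.
have xaS := M_S xaM; have xbS := M_S xbM; have mS := M_S (M_meet xaM xbM).
rewrite count_two // count_single // Dxa Dxb Dm' !andbT lexI.
by move: yab; case: (y <= xa)%O; case: (y <= xb)%O.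
Qed.

Lemma HdI : ~~ has (fun z => has (fun q => attached C z q) A && has (fun r => attached C z r) B) C ->
  forall y, y \in S -> y < x -> (exists2 w0, (w0 \in S) && Dm w0 & y <= w0) ->
    (\sum_(w <- S | (y <= w)%O && Dm w) (Posz (eta_att C w) + dlI w))%R =
      (Posz (\sum_(c <- C) ((y <= c)%O : nat))%N - 1)%R.
Proof.
move=> nh y yS yx [w0 /andP[w0S Dw0] yw0].
rewrite big_split /= sumZ eta_exchange (sum_dlI w0S Dw0 yw0).
congr (Posz _ - _)%R; rewrite big_seq_cond [RHS]big_seq_cond; apply: eq_bigr => c /andP[cC _].
apply: (k_val cC _ w0S Dw0 yw0); apply: uniq_att_nb => //.
by move/hasPn: nh; apply.
Qed.

Definition dlII w : int := (- Posz ((w == xa) || (w == xb)))%R.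

Lemma att_meet_top cp q t : cp \in C -> attached C cp q -> Dm t -> q <= t -> cp `&` t = q.
Proof.
move=> cC aq Dt qt.
have cM := C_M cC; have tM : t \in M by case/andP: Dt.
have /and3P[qM _ qc] := att_lt aq.
have qv : q <= cp `&` t by rewrite lexI (ltW qc) qt.
have vc : cp `&` t < cp.
  rewrite lt_neqAle leIl andbT; apply/negP => /eqP ev.
  have ct : cp <= t by rewrite -ev leIr.
  case: (D_lt Dt) => c' c'C tc'.
  have := C_anti cC c'C (ltW (le_lt_trans ct tc')) => e.
  by move: (le_lt_trans ct tc'); rewrite e ltxx.
move: qv; rewrite le_eqVlt => /orP[/eqP <- //|lt].
case/and4P: aq => _ _ _ /hasPn /(_ _ (M_meet cM tM)).
by rewrite lt vc.
Qed.

Lemma caseII_key cp q r y : cp \in C -> q \in A -> r \in B ->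
  attached C cp q -> attached C cp r -> y <= xa -> y <= xb -> y <= cp.
Proof.
move=> cC qA rB aq ar yxa yxb.
case: dc => _ disj chA chB.
have Dq : Dm q by rewrite DAB qA.
have Dr : Dm r by rewrite DAB rB orbT.
have Dxa := xa_D Dq; have Dxb := xb_D Dq.
have xaM : xa \in M by case/andP: Dxa.
have xbM : xb \in M by case/andP: Dxb.
have Dm' : Dm (xa `&` xb) by apply: Dm_le Dxa (M_meet xaM xbM) (leIl _ _).
have eq1 := att_meet_top cC aq Dxa (A_top qA).
have eq2 := att_meet_top cC ar Dxb (B_top rB).
have /and3P[_ _ qc] := att_lt aq; have /and3P[_ _ rc] := att_lt ar.
have ym : y <= xa `&` xb by rewrite lexI yxa yxb.
move: Dm'; rewrite DAB => /orP[mA|mB].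
  case/orP: (chA _ _ mA qA) => [mq|qm].
    exact: le_trans ym (le_trans mq (ltW qc)).
  have qxb : q <= xb by apply: le_trans qm (leIr _ _).
  have qr : q <= r by rewrite -eq2 lexI (ltW qc) qxb.
  have := att_eq aq ar qr => eqr.
  by move: (disj _ qA); rewrite eqr rB.
case/orP: (chB _ _ mB rB) => [mr|rm].
  exact: le_trans ym (le_trans mr (ltW rc)).
have rxa : r <= xa by apply: le_trans rm (leIl _ _).
have rq : r <= q by rewrite -eq1 lexI (ltW rc) rxa.
have := att_eq ar aq rq => eqr.
by move: (disj _ qA); rewrite -eqr rB.
Qed.

Lemma k_cp y cp q r : cp \in C -> q \in A -> r \in B ->
  attached C cp q -> attached C cp r ->
  count (fun w => ((y <= w)%O && Dm w) && attached C cp w) S = ((y <= q)%O + (y <= r)%O)%N.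
Proof.
move=> cC qA rB aq ar; case: dc => _ disj chA chB.
have Dq : Dm q by rewrite DAB qA.
have Dr : Dm r by rewrite DAB rB orbT.
have qS : q \in S by apply: M_S; case/andP: Dq.
have rS : r \in S by apply: M_S; case/andP: Dr.
have nqr : q != r by apply/negP => /eqP e; move: (disj _ qA); rewrite e rB.
rewrite -(count_two (fun w => y <= w) uS nqr qS rS); apply: eq_in_count => w wS /=.
rewrite -andbA; congr andb; apply/idP/idP => [/andP[Dw aw]|/orP[]/eqP ->].
- move: Dw; rewrite DAB => /orP[wA|wB].
    by rewrite (att_cmp aw aq (chA _ _ wA qA)) eqxx.
  by rewrite (att_cmp aw ar (chB _ _ wB rB)) eqxx orbT.
- by rewrite Dq aq.
- by rewrite Dr ar.
Qed.

Lemma natII y w0 cp q r : cp \in C -> q \in A -> r \in B ->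
  attached C cp q -> attached C cp r -> Dm w0 -> y <= w0 ->
  ((y <= q)%O + (y <= r)%O + 1 = (y <= cp)%O + (y <= xa)%O + (y <= xb)%O)%N.
Proof.
move=> cC qA rB aq ar Dw0 yw0.
have Dq : Dm q by rewrite DAB qA.
have Dr : Dm r by rewrite DAB rB orbT.
have eq1 := att_meet_top cC aq (xa_D Dq) (A_top qA).
have eq2 := att_meet_top cC ar (xb_D Dq) (B_top rB).
have /and3P[_ _ qc] := att_lt aq; have /and3P[_ _ rc] := att_lt ar.
case: (boolP (y <= cp)) => ycp.
  by rewrite -eq1 -eq2 !lexI ycp /=; case: (y <= xa)%O; case: (y <= xb)%O.
have -> : (y <= q) = false by apply/negP => yq; case/negP: ycp; apply: le_trans yq (ltW qc).
have -> : (y <= r) = false by apply/negP => yq; case/negP: ycp; apply: le_trans yq (ltW rc).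
have yab : (y <= xa) || (y <= xb).
  by case/orP: (top_of_D Dw0) => h; rewrite (le_trans yw0 h) ?orbT.
case: (boolP (y <= xa)) => ya; case: (boolP (y <= xb)) => yb //=.
- by case/negP: ycp; apply: caseII_key cC qA rB aq ar ya yb.
- by move: yab; rewrite (negbTE ya) (negbTE yb).
Qed.

Lemma HdII cp q r : cp \in C -> q \in A -> r \in B -> attached C cp q -> attached C cp r ->
  (forall c, c \in C -> has (fun q => attached C c q) A && has (fun r => attached C c r) B -> c = cp) ->
  forall y, y \in S -> y < x -> (exists2 w0, (w0 \in S) && Dm w0 & y <= w0) ->
    (\sum_(w <- S | (y <= w)%O && Dm w) (Posz (eta_att C w) + dlII w))%R =
      (Posz (\sum_(c <- C) ((y <= c)%O : nat))%N - 1)%R.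
Proof.
move=> cC qA rB aq ar ucp y yS yx [w0 /andP[w0S Dw0] yw0].
case: dc => _ disj chA chB.
have Dq : Dm q by rewrite DAB qA.
have Dxa := xa_D Dq; have Dxb := xb_D Dq.
have xaS : xa \in S by apply: M_S; case/andP: Dxa.
have xbS : xb \in S by apply: M_S; case/andP: Dxb.
have xaA : xa \in A by have /tA /andP[] : A != [::] by case: (A) qA.
have xbB : xb \in B by have /tB /andP[] : B != [::] by case: (B) rB.
have nab : xa != xb by apply/negP => /eqP e; move: (disj _ xaA); rewrite e xbB.
rewrite big_split /= sumZ eta_exchange /dlII sumrN sumZ sum_bool count_two // Dxa Dxb !andbT.
rewrite (bigD1_seq cp) ?uniqC //= [in RHS](bigD1_seq cp) ?uniqC //=.
rewrite (k_cp y cC qA rB aq ar).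
have -> : (\sum_(i <- C | i != cp) count (fun w => ((y <= w)%O && Dm w) && attached C i w) S)%N
        = (\sum_(i <- C | i != cp) ((y <= i)%O : nat))%N.
  rewrite big_seq_cond [RHS]big_seq_cond; apply: eq_bigr => c /andP[cC' ncp].
  apply: (k_val cC' _ w0S Dw0 yw0); apply: uniq_att_nb => //.
  by apply/negP => /(ucp _ cC') ec; rewrite ec eqxx in ncp.
have := natII cC qA rB aq ar Dw0 yw0.
move: (nat_of_bool (y <= q)%O) (nat_of_bool (y <= r)%O) (nat_of_bool (y <= cp)%O)
  (nat_of_bool (y <= xa)%O) (nat_of_bool (y <= xb)%O) => n1 n2 n3 n4 n5.
move: (\sum_(i <- C | i != cp) ((y <= i)%O : nat))%N => R H.
clear -H; lia.
Qed.

Lemma caseI_res :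
  ~~ has (fun z => has (fun q => attached C z q) A && has (fun r => attached C z r) B) C ->
   forall xj, xj \in S ->
   moebius S xj x =
     (if xj == x then 1
      else if xj \in C then -1
      else if (xj \in [:: xa; xb]) && maximal_in (A ++ B) xj then (eta_att C xj)%:Z - 1
      else if [&& xj \in [:: xa; xb], xj \in (A ++ B) & ~~ maximal_in (A ++ B) xj] then (eta_att C xj)%:Z
      else if [&& xj \in (A ++ B), ~~ maximal_in (A ++ B) xj & xj != (xa `&` xb)%O] then (eta_att C xj)%:Z
      else if [&& ~~ (xa >=< xb)%O, xj == (xa `&` xb)%O & xj \in (A ++ B)] then (eta_att C xj)%:Z + 1
      else 0)%R.
Proof.
move=> nh; apply: (final_formula (dl := dlI)); last exact: HdI.
move=> w wS; rewrite /Fd /dlI.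
case: (eqVneq w x) => [->|nwx].
  have -> : (x \in C) = false by apply/negP => /C_lt; rewrite ltxx.
  have -> : Dm x = false by apply/negP => /andP[/M_lt]; rewrite ltxx.
  by [].
case: (boolP (w \in C)) => wC.
  have -> : Dm w = false by rewrite /Dm wC andbF.
  by [].
have eD : Dm w = (w \in A ++ B) by rewrite DAB mem_cat.
rewrite eD; case: (boolP (w \in A ++ B)) => wAB; last first.
  by rewrite /maximal_in (negbTE wAB) !andbF /=.
rewrite /=.
have inab : (w \in [:: xa; xb]) = (w == xa) || (w == xb) by rewrite !inE.
rewrite inab.
have F1 : ~~ (xa >=< xb) -> w == xa `&` xb -> ((w == xa) || (w == xb)) = false.
  move=> nc /eqP ->; apply/negP => /orP[/eqP e|/eqP e]; case/negP: nc; rewrite /Order.comparable.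
    by rewrite -{1}e leIr.
  by rewrite -{2}e leIl orbT.
have F2 : (xa >=< xb) -> (w == xa `&` xb) -> (w == xa) || (w == xb).
  by case/orP => h /eqP ->; [rewrite meet_l // eqxx | rewrite meet_r // eqxx orbT].
case mx: (maximal_in (A ++ B) w) => /=.
  rewrite (maxAB mx) /=.
  have -> : (~~ (xa >=< xb) && (w == xa `&` xb)) = false.
    by apply/negP => /andP[nc e]; move: (F1 nc e); rewrite (maxAB mx).
  by move: (eta_att C w) => n; clear -n; lia.
case hin: ((w == xa) || (w == xb)) => /=.
  have -> : (~~ (xa >=< xb) && (w == xa `&` xb)) = false.
    by apply/negP => /andP[nc e]; rewrite (F1 nc e) in hin.
  by move: (eta_att C w) => n; clear -n; lia.
case: (boolP (w == xa `&` xb)) => e /=.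
  case: (boolP (xa >=< xb)) => c /=.
    by rewrite (F2 c e) in hin.
  by move: (eta_att C w) => n; clear -n; lia.
rewrite andbF.
by move: (eta_att C w) => n; clear -n; lia.
Qed.

Lemma caseII_res :
  count (fun z => has (fun q => attached C z q) A && has (fun r => attached C z r) B) C = 1%N ->
   forall xj, xj \in S ->
   moebius S xj x =
     (if xj == x then 1
      else if xj \in C then -1
      else if (xj \in A ++ B) && ((xj == xa) || (xj == xb)) then (eta_att C xj)%:Z - 1
      else if [&& xj \in A ++ B, xj != xa & xj != xb] then (eta_att C xj)%:Z
      else 0)%R.
Proof.
move=> c1.
have : has (fun z => has (fun q => attached C z q) A && has (fun r => attached C z r) B) C.
  by rewrite has_count c1.
case/hasP => cp cpC /andP[/hasP[q qA aq] /hasP[r rB ar]].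
have ucp : forall c, c \in C -> has (fun q => attached C c q) A && has (fun r => attached C c r) B -> c = cp.
  move=> c cC hc; apply: (count_one_eq uniqC c1) => //.
  by rewrite (introT hasP (ex_intro2 _ _ q qA aq)) (introT hasP (ex_intro2 _ _ r rB ar)).
apply: (final_formula (dl := dlII)); last exact: (HdII cpC qA rB aq ar ucp).
move=> w wS; rewrite /Fd /dlII.
case: (eqVneq w x) => [->|nwx].
  have -> : (x \in C) = false by apply/negP => /C_lt; rewrite ltxx.
  have -> : Dm x = false by apply/negP => /andP[/M_lt]; rewrite ltxx.
  by [].
case: (boolP (w \in C)) => wC.
  have -> : Dm w = false by rewrite /Dm wC andbF.
  by [].
have eD : Dm w = (w \in A ++ B) by rewrite DAB mem_cat.
rewrite eD; case: (boolP (w \in A ++ B)) => wAB //=.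
case: (eqVneq w xa) => [ea|na]; first by rewrite /= subr0 add0r.
case: (eqVneq w xb) => [eb|nb]; first by rewrite /= subr0 add0r.
by rewrite /= !subr0 add0r.
Qed.
End Main.

Theorem theorem3p1 (d : Order.disp_t) (P : meetSemilatticeType d)
  (S : seq P) (xi : P) (A B : seq P) (xa xb : P) :
  locally_finite (P := P) ->
  uniq S -> meet_closed_seq S ->
  xi \in S ->
  double_chain S xi A B ->
  (A != [::] -> is_top A xa) -> (A == [::] -> B != [::] -> is_top B xa) ->
  (B != [::] -> is_top B xb) -> (B == [::] -> A != [::] -> is_top A xb) ->
  let C := cov_set S xi in
  let AB := A ++ B in
  let att_both := fun z => has (fun q => attached C z q) A && has (fun r => attached C z r) B in
  (~~ has att_both C ->
   forall xj, xj \in S ->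
   moebius S xj xi =
     (if xj == xi then 1
      else if xj \in C then -1
      else if (xj \in [:: xa; xb]) && maximal_in AB xj then (eta_att C xj)%:Z - 1
      else if [&& xj \in [:: xa; xb], xj \in AB & ~~ maximal_in AB xj] then (eta_att C xj)%:Z
      else if [&& xj \in AB, ~~ maximal_in AB xj & xj != (xa `&` xb)%O] then (eta_att C xj)%:Z
      else if [&& ~~ (xa >=< xb)%O, xj == (xa `&` xb)%O & xj \in AB] then (eta_att C xj)%:Z + 1
      else 0)%R) /\
  (count att_both C = 1%N ->
   forall xj, xj \in S ->
   moebius S xj xi =
     (if xj == xi then 1
      else if xj \in C then -1
      else if (xj \in AB) && ((xj == xa) || (xj == xb)) then (eta_att C xj)%:Z - 1
      else if [&& xj \in AB, xj != xa & xj != xb] then (eta_att C xj)%:Z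
      else 0)%R).
Proof.
move=> _ uS mcS xS dc tA tA' tB tB' C AB att_both; split.
  exact: (caseI_res uS mcS xS dc tA tA' tB tB').
exact: (caseII_res uS mcS xS dc tA tA' tB tB').
Qed.
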